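(* For every integer $N\ge1$, $u\in\mathbb{C}$ and $\tau$ with $\operatorname{Im}\tau>0$, $$(-i)^{N+1}e^{-\pi i(N-1)u}q^{\frac{(N-1)^2}{8N}}R\!\left(u;\tfrac\tau N\right)=\sum_{k=0}^{N-1}(-1)^ke^{-2\pi iku}q^{-\frac{k(k-N+1)}{2N}}R\!\left(Nu+k\tau-\tfrac{N-1}{2}\tau+\tfrac{N+1}{2};N\tau\right).$$
   Context: $q=e^{2\pi i\tau}$, $q^c:=e^{2\pi ic\tau}$. $E(x)=2\int_0^xe^{-\pi z^2}dz$. For $w\in\mathbb{C}$ and $\sigma$ with $\operatorname{Im}\sigma>0$, with $t=\operatorname{Im}\sigma$ and $a=\operatorname{Im}w/\operatorname{Im}\sigma$: $R(w;\sigma)=\sum_{\nu\in\mathbb{Z}+1/2}\{\operatorname{sgn}(\nu)-E((\nu+a)\sqrt{2t})\}(-1)^{\nu-1/2}e^{-2\pi i\nu w}e^{-\pi i\nu^2\sigma}$. *)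

(* Defs.v *)
From Stdlib Require Import Reals ZArith.
From Coquelicot Require Import Coquelicot.
Open Scope R_scope.

Definition cexp (z : C) : C :=
  (exp (Re z) * cos (Im z), exp (Re z) * sin (Im z)).

(* q^c := e^{2 pi i c tau} *)
Definition qpow (tau : C) (c : R) : C :=
  cexp (Cmult (Cmult (RtoC (2 * PI * c)) Ci) tau).

Definition Eerr (x : R) : R := 2 * RInt (fun z => exp (- PI * z ^ 2)) 0 x.

Definition sgn (x : R) : R :=
  if Rlt_dec 0 x then 1 else if Rlt_dec x 0 then -1 else 0.

Definition CSeries (f : nat -> C) : C :=
  (Series (fun m => Re (f m)), Series (fun m => Im (f m))).

Definition ZSeries (f : Z -> C) : C :=
  CSeries (fun m => Cplus (f (Z.of_nat m)) (f (- Z.of_nat (S m))%Z)).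

(* summand of R(w;sigma) indexed by nu = n + 1/2, n in Z *)
Definition Rterm (w sigma : C) (n : Z) : C :=
  let t := Im sigma in
  let a := Im w / Im sigma in
  let nu := IZR n + / 2 in
  Cmult (Cmult (RtoC (sgn nu - Eerr ((nu + a) * sqrt (2 * t))))
               (RtoC (powerRZ (-1) n)))
        (Cmult (cexp (Cmult (Cmult (RtoC (- 2 * PI * nu)) Ci) w))
               (cexp (Cmult (Cmult (RtoC (- PI * nu ^ 2)) Ci) sigma))).

Definition Rfun (w sigma : C) : C := ZSeries (Rterm w sigma).

(* Main.v *)
Require Import Defs.
From Stdlib Require Import Reals ZArith.
From Coquelicot Require Import Coquelicot.
From Stdlib Require Import Lra Lia.
From HB Require structures.
From mathcomp Require all_boot all_order all_algebra all_classical all_reals all_analysis Rstruct Rstruct_topology.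

Open Scope R_scope.
Definition dq (F : R -> R) y l h := if Req_EM_T h 0 then l else (F (h + y) - F y) / h.
Lemma dq_0 F y l : dq F y l 0 = l.
Proof. unfold dq; destruct (Req_EM_T 0 0); congruence. Qed.
Lemma dq_ne F y l h : h <> 0 -> dq F y l h = (F (h + y) - F y) / h.
Proof. intro H; unfold dq; destruct (Req_EM_T h 0); congruence. Qed.
Lemma dq_cont (F : R -> R) y l : derivable_pt_lim F y l -> continuity_pt (dq F y l) 0.
Proof.
intros H eps Heps. destruct (H eps Heps) as [d Hd].
exists d; split; [apply cond_pos|].
intros x [[_ Hx0] Hxd]. simpl in *. unfold R_dist in *.
rewrite dq_0, dq_ne by auto.
rewrite Rminus_0_r in Hxd. rewrite Rplus_comm. apply Hd; auto.
Qed.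
Close Scope R_scope.
Module GB.
Import HB.structures.
Import all_boot all_order all_algebra.
Import all_classical all_reals all_analysis.
Import Rstruct Rstruct_topology.
Import Order.TTheory GRing.Theory Num.Theory.
Import numFieldNormedType.Exports.
Local Open Scope classical_set_scope.
Local Open Scope ring_scope.

Lemma RcosE (x : R) : Rtrigo_def.cos x = cos x.
Proof.
rewrite /Rtrigo_def.cos; case: exist_cos => l.
rewrite /cos_in /Pser /infinite_sum => Hl.
have h2 : series (cos_coeff' x) @ \oo --> (l : R^o).
  rewrite -cvg_shiftS /=; apply/(@cvgrPdist_lt _ R^o) => /= e /RltP /Hl[N NH].
  near=> n.
  have nN : (n >= N)%coq_nat by apply/ssrnat.leP; near: n; exact: nbhs_infty_ge.
  move: NH => /(_ _ nN) /[!RdistE] /RltP /=.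
  rewrite distrC sum_f_R0E; congr (`| _ - _ | < e).
  apply: eq_bigr=> k _; rewrite /cos_n /cos_coeff' RpowE RpowE factE INRE.
  rewrite /Rsqr (_ : (x * x)%coqR = x ^+ 2); last by rewrite expr2.
  rewrite -exprM -mul2n.
  have -> : (2 * k)%coq_nat = (2 * k)%N by [].
  by rewrite mulrAC.
have h1 := @cvg_cos_coeff' _ x.
by rewrite -(cvg_lim (@Rhausdorff R) h1) -(cvg_lim (@Rhausdorff R) h2).
Unshelve. all: by end_near. Qed.

Lemma RPIE : PI = pi.
Proof.
have h : (PI / 2)%coqR = pi / 2.
  have H1 := PI_4; have H2 := PI2_RGT_0.
  apply: cos_02_uniq.
  - have e2 : (2%:R : R) = 2%coqR by rewrite -INRE /=; lra.
    by apply/andP; split; apply/RleP; rewrite ?e2; [exact: Rlt_le H2|lra].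
  - by rewrite -RcosE; exact: cos_PI2.
  - exact: (@pihalf_02_cos_pihalf R).1.
  - exact: cos_pihalf.
rewrite (_ : PI = (PI / 2) * 2)%coqR; last by field.
have e2 : (2%:R : R) = 2%coqR by rewrite -INRE /=; lra.
by rewrite h -e2 RmultE mulfVK // pnatr_eq0.
Qed.
Definition RR : realType := R.
Lemma deriv_bridge (F : RR -> RR) (y l : RR) : derivable_pt_lim F y l ->
  derivable F y 1 /\ (F^`())%classic y = l.
Proof.
move=> H; have /continuity_pt_dnbhs hc := @dq_cont F y l H.
have cv : (fun h => h^-1 *: (F (h + y) - F y)) @ 0^' --> l.
  apply/cvgrPdist_lt => e e0.
  move: (hc e e0) (@nbhs_dnbhs_neq RR 0) => A B.
  near=> u.
  have hu : u != 0 by near: u; exact: B.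
  have : `|dq F y l 0 - dq F y l u| < e by near: u; exact A.
  rewrite dq_0 dq_ne; last by apply/eqP.
  by rewrite RdivE mulrC.
split; last by apply: cvg_lim => //; exact: Rhausdorff.
apply/cvg_ex; exists l => /=.
by under eq_fun do rewrite scaler1.
Unshelve. all: by end_near. Qed.
Import gauss_integral_proof.
Lemma gauss_ftc (F : RR -> RR) : (forall y, continuity_pt F y) ->
  (forall y, derivable_pt_lim F y (Rtrigo_def.exp (- (y*y)))%coqR) ->
  forall x : RR, 0 < x -> integral0_gauss x = F x - F 0.
Proof.
move=> Fc Fd x x0.
have := @continuous_FTC2 RR gauss_fun F 0 x x0.
rewrite /integral0_gauss /Rintegral => ->; first by [].
- by apply: continuous_subspaceT; exact: continuous_gauss_fun.
- split.
  + by move=> y _; exact: (@deriv_bridge _ _ _ (Fd y)).1.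
  + by apply: cvg_at_right_filter; exact/continuity_pt_cvg.
  + by apply: cvg_at_left_filter; exact/continuity_pt_cvg.
- move=> y _; rewrite (@deriv_bridge _ _ _ (Fd y)).2 /gauss_fun RexpE.
  by congr expR; rewrite expr2.
Qed.
Lemma cvg_Ig : @integral0_gauss RR x @[x --> +oo] --> Num.sqrt pi / 2.
Proof.
have : Num.sqrt (@integral0_gauss RR x ^+ 2) @[x --> +oo] --> Num.sqrt (pi / 4).
  apply: continuous_cvg => //;
    [exact: sqrt_continuous|exact: cvg_integral0_gauss_sqr].
rewrite sqrtrM ?pi_ge0// sqrtrV// (_ : 4 = 2 ^+ 2); last first.
  by rewrite expr2 -natrM.
rewrite sqrtr_sqr ger0_norm//.
rewrite (_ : (fun _ => Num.sqrt _) = integral0_gauss)//.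
apply/funext => r; rewrite sqrtr_sqr// ger0_norm//.
exact: integral0_gauss_ge0.
Qed.

Lemma gauss_lim (F : RR -> RR) : F 0 = 0 -> (forall y, continuity_pt F y) ->
  (forall y, derivable_pt_lim F y (Rtrigo_def.exp (- (y*y)))%coqR) ->
  forall eps : RR, (0 < eps)%coqR -> exists M : RR, forall x : RR, (M <= x)%coqR ->
  (Rabs (F x - sqrt PI / 2) < eps)%coqR.
Proof.
move=> F0 Fc Fd e /RltP e0.
have := cvg_Ig; move/cvgrPdist_lt => /(_ e e0) [M [Mr HM]].
exists (Num.max (M + 1) 1) => x /RleP; rewrite ge_max => /andP[xM x1].
have x0 : 0 < x by apply: lt_le_trans x1.
have xM' : M < x by apply: lt_le_trans xM; rewrite ltrDl.
have := HM x xM'.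
rewrite (@gauss_ftc F Fc Fd x x0) F0 subr0 => h.
have e2 : (2%:R : R) = 2%coqR by rewrite -INRE /=; lra.
apply/RltP; rewrite RabsE RsqrtE RPIE RdivE -e2 distrC; exact: h.
Qed.
End GB.


Open Scope R_scope.

Definition gfun (z : R) := exp (- (z * z)).
Definition hfun (z : R) := exp (- PI * z ^ 2).

Lemma gfun_cont z : continuous gfun z.
Proof.
unfold gfun. apply (@ex_derive_continuous R_AbsRing R_NormedModule). auto_derive. auto.
Qed.

Lemma hfun_cont z : continuous hfun z.
Proof.
unfold hfun. apply (@ex_derive_continuous R_AbsRing R_NormedModule). auto_derive. auto.
Qed.

Lemma ex_RInt_g a b : ex_RInt gfun a b.
Proof. apply (@ex_RInt_continuous R_CompleteNormedModule); intros; apply gfun_cont. Qed.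
Lemma ex_RInt_h a b : ex_RInt hfun a b.
Proof. apply (@ex_RInt_continuous R_CompleteNormedModule); intros; apply hfun_cont. Qed.

Lemma Gint_deriv y : derivable_pt_lim (RInt gfun 0) y (exp (- (y * y))).
Proof.
apply is_derive_Reals. apply (is_derive_RInt gfun (RInt gfun 0) 0 y).
- apply filter_forall. intros b. apply (@RInt_correct R_CompleteNormedModule), ex_RInt_g.
- apply gfun_cont.
Qed.

Lemma Gint_lim eps : 0 < eps -> exists M, forall x, M <= x ->
  Rabs (RInt gfun 0 x - sqrt PI / 2) < eps.
Proof.
apply (GB.gauss_lim (RInt gfun 0)).
- exact (RInt_point _ _).
- intros y. apply derivable_continuous_pt. exists (exp (- (y*y))). apply Gint_deriv.
- apply Gint_deriv.
Qed.

Lemma sqrtPI_pos : 0 < sqrt PI.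
Proof. apply sqrt_lt_R0, PI_RGT_0. Qed.

Lemma H_G x : RInt hfun 0 x = / sqrt PI * RInt gfun 0 (sqrt PI * x).
Proof.
generalize ( RInt_comp_lin gfun (sqrt PI) 0 0 x (ex_RInt_g _ _)).
replace (sqrt PI * 0 + 0) with 0 by ring. rewrite Rplus_0_r. intros <-.
rewrite RInt_scal. 2:{
  apply (@ex_RInt_continuous R_CompleteNormedModule); intros. unfold gfun.
  apply (@ex_derive_continuous R_AbsRing R_NormedModule). auto_derive. auto. }
rewrite (RInt_ext (fun y => gfun (sqrt PI * y + 0)) hfun). 2:{ intros z _. unfold gfun, hfun. f_equal.
  replace ((sqrt PI * z + 0) * (sqrt PI * z + 0)) with (sqrt PI * sqrt PI * (z*z)) by ring.
  rewrite sqrt_sqrt. ring. left; apply PI_RGT_0. }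
unfold scal; simpl; unfold mult; simpl. change (RInt hfun 0 x = / sqrt PI * (sqrt PI * RInt hfun 0 x)). rewrite <- Rmult_assoc, Rinv_l, Rmult_1_l. reflexivity. apply Rgt_not_eq, sqrtPI_pos.
Qed.

Lemma H_lim eps : 0 < eps -> exists M, forall x, M <= x ->
  Rabs (RInt hfun 0 x - / 2) < eps.
Proof.
intros He. pose proof sqrtPI_pos as Hs.
destruct (Gint_lim (eps * sqrt PI)) as [M HM]. nra.
exists (M / sqrt PI). intros x Hx. rewrite H_G.
assert (Hx' : M <= sqrt PI * x).
{ apply (Rmult_le_compat_l (sqrt PI)) in Hx; [|lra].
  replace (sqrt PI * (M / sqrt PI)) with M in Hx by (field; lra). exact Hx. }
specialize (HM _ Hx').
replace (/ sqrt PI * RInt gfun 0 (sqrt PI * x) - / 2) with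
  (/ sqrt PI * (RInt gfun 0 (sqrt PI * x) - sqrt PI / 2)) by (field; lra).
rewrite Rabs_mult, Rabs_inv, (Rabs_right (sqrt PI)) by lra.
apply (Rmult_lt_reg_l (sqrt PI)); [lra|].
rewrite <- Rmult_assoc, Rinv_r, Rmult_1_l by lra. nra.
Qed.


Open Scope R_scope.

Lemma exp_le_mono x y : x <= y -> exp x <= exp y.
Proof. intros [H|H]; [left; apply exp_increasing; auto|right; subst; auto]. Qed.

Lemma exp_ge1 x : 0 <= x -> 1 <= exp x.
Proof. intros H. rewrite <- exp_0. apply exp_le_mono; auto. Qed.

Lemma hfun_pos z : 0 < hfun z.
Proof. apply exp_pos. Qed.

Lemma hfun_le1 z : hfun z <= 1.
Proof. unfold hfun. rewrite <- exp_0. apply exp_le_mono.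
pose proof PI_RGT_0. assert (0 <= z^2) by (simpl; nra). nra. Qed.

Lemma H_ge0 x : 0 <= x -> 0 <= RInt hfun 0 x.
Proof. intros Hx. apply RInt_ge_0; auto. apply ex_RInt_h.
intros; left; apply hfun_pos. Qed.

Lemma H_shift x L : 0 <= x -> 0 <= L ->
  0 <= RInt hfun 0 (x + L) - RInt hfun 0 x <= hfun x * RInt hfun 0 L.
Proof.
intros Hx HL.
assert (Hc : RInt hfun 0 (x + L) - RInt hfun 0 x = RInt hfun x (x + L)).
{ rewrite <- (RInt_Chasles hfun 0 x (x + L)) by apply ex_RInt_h.
  unfold plus; simpl. ring. }
rewrite Hc. split.
- apply RInt_ge_0; [lra|apply ex_RInt_h|intros; left; apply hfun_pos].
- generalize (RInt_comp_lin hfun 1 x 0 L (ex_RInt_h _ _)).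
  replace (1 * 0 + x) with x by ring. replace (1 * L + x) with (x + L) by ring.
  intros <-.
  assert (E : RInt (fun y => hfun x * hfun y) 0 L = hfun x * RInt hfun 0 L).
  { generalize (RInt_scal hfun 0 L (hfun x) (ex_RInt_h _ _)). unfold scal; simpl; unfold mult; simpl.
    auto. }
  rewrite <- E. apply RInt_le; auto.
  + apply (@ex_RInt_continuous R_CompleteNormedModule); intros. unfold scal; simpl; unfold mult; simpl.
    unfold hfun. apply (@ex_derive_continuous R_AbsRing R_NormedModule). auto_derive. auto.
  + apply (@ex_RInt_continuous R_CompleteNormedModule); intros.
    unfold hfun. apply (@ex_derive_continuous R_AbsRing R_NormedModule). auto_derive. auto.
  + intros y Hy. unfold scal; simpl; unfold mult; simpl. unfold hfun.
    rewrite <- exp_plus. rewrite Rmult_1_l. apply exp_le_mono. pose proof PI_RGT_0.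
    simpl. assert (0 <= PI * (x * y)) by (apply Rmult_le_pos; nra). nra.
Qed.

Lemma H_tail x : 0 <= x -> 0 <= / 2 - RInt hfun 0 x <= hfun x / 2.
Proof.
intros Hx. split.
- apply Rle_plus_epsilon. intros eps He.
  destruct (H_lim eps He) as [M HM].
  pose (L := Rmax M 0).
  assert (HL : 0 <= L) by apply Rmax_r.
  assert (HxL : M <= x + L) by (unfold L; generalize (Rmax_l M 0); lra).
  specialize (HM _ HxL). destruct (H_shift x L Hx HL) as [H1 _].
  apply Rabs_def2 in HM. lra.
- apply Rle_plus_epsilon. intros eps He.
  destruct (H_lim (eps / 3) ltac:(lra)) as [M HM].
  pose (L := Rmax M 0).
  assert (HL : 0 <= L) by apply Rmax_r.
  assert (HLM : M <= L) by apply Rmax_l.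
  assert (HxL : M <= x + L) by lra.
  generalize (HM _ HxL) (HM _ HLM). intros A B.
  apply Rabs_def2 in A. apply Rabs_def2 in B.
  destruct (H_shift x L Hx HL) as [_ H2].
  pose proof (hfun_pos x). pose proof (hfun_le1 x).
  assert (hfun x * RInt hfun 0 L <= hfun x * (/2 + eps/3)) by (apply Rmult_le_compat_l; lra).
  nra.
Qed.

Lemma Eerr_H x : Eerr x = 2 * RInt hfun 0 x.
Proof. reflexivity. Qed.

Lemma H_odd x : RInt hfun 0 (- x) = - RInt hfun 0 x.
Proof.
generalize (RInt_comp_lin hfun (-1) 0 0 x (ex_RInt_h _ _)).
replace (-1 * 0 + 0) with 0 by ring. replace (-1 * x + 0) with (- x) by ring.
intros <-.
rewrite (RInt_ext (fun y => scal (-1) (hfun (-1 * y + 0))) (fun y => scal (-1) (hfun y))).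
2:{ intros y _. f_equal. unfold hfun. f_equal. simpl. ring. }
generalize (RInt_scal hfun 0 x (-1) (ex_RInt_h _ _)). unfold scal; simpl; unfold mult; simpl.
intros ->. ring.
Qed.

Lemma Eerr_odd x : Eerr (- x) = - Eerr x.
Proof. rewrite !Eerr_H, H_odd. ring. Qed.

Lemma Eerr_tail x : 0 <= x -> 0 <= 1 - Eerr x <= hfun x.
Proof. intros Hx. rewrite Eerr_H. generalize (H_tail x Hx). lra. Qed.

Lemma Eerr_abs x : Rabs (Eerr x) <= 1.
Proof.
destruct (Rle_or_lt 0 x) as [Hx|Hx].
- generalize (Eerr_tail x Hx) (H_ge0 x Hx). rewrite Eerr_H. intros.
  apply Rabs_le. lra.
- replace x with (- - x) by ring. rewrite Eerr_odd, Rabs_Ropp.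
  generalize (Eerr_tail (-x) ltac:(lra)) (H_ge0 (-x) ltac:(lra)). rewrite Eerr_H. intros.
  apply Rabs_le. lra.
Qed.

Lemma abs_le_inv x y : Rabs x <= y -> -y <= x <= y.
Proof. unfold Rabs; destruct (Rcase_abs x); lra. Qed.

Lemma sgn_pos x : 0 < x -> sgn x = 1.
Proof. intros H. unfold sgn. destruct (Rlt_dec 0 x); [auto|lra]. Qed.
Lemma sgn_neg x : x < 0 -> sgn x = -1.
Proof. intros H. unfold sgn. destruct (Rlt_dec 0 x); [lra|]. destruct (Rlt_dec x 0); [auto|lra]. Qed.

Lemma sgnE_bound nu a s : nu <> 0 -> 0 <= s ->
  Rabs (sgn nu - Eerr ((nu + a) * s)) <= 2 * exp (PI * a^2 * s^2) * exp (- PI * ((nu + a) * s)^2).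
Proof.
intros Hnu Hs. pose proof PI_RGT_0 as Hpi.
set (x := (nu + a) * s).
assert (Hbig : x^2 <= a^2 * s^2 -> 1 <= exp (PI * a^2 * s^2) * exp (- PI * x^2)).
{ intros Hx. rewrite <- exp_plus. apply exp_ge1. nra. }
assert (Hone : 1 <= exp (PI * a^2 * s^2)).
{ apply exp_ge1. simpl. assert (0 <= a*a*(s*s)) by (apply Rmult_le_pos; nra). nra. }
assert (Hep : 0 < exp (- PI * x^2)) by apply exp_pos.
destruct (Rlt_or_le 0 nu) as [Hp|Hn].
- rewrite sgn_pos by auto.
  destruct (Rle_or_lt 0 x) as [Hx|Hx].
  + generalize (Eerr_tail x Hx). unfold hfun. intros.
    rewrite Rabs_right by lra. nra.
  + assert (Hs' : 0 < s) by (destruct Hs; auto; subst x; subst; lra).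
    assert (nu + a < 0).
    { destruct (Rle_or_lt 0 (nu + a)); auto. subst x. nra. }
    assert (x^2 <= a^2 * s^2).
    { subst x. simpl. assert (0 <= (nu + a) * (nu + a) <= a * a) by nra.
      assert (0 <= s * s) by nra. nra. }
    generalize (Hbig H0) (Eerr_abs x). intros.
    apply abs_le_inv in H2. apply Rabs_le. nra.
- assert (Hn' : nu < 0) by lra. rewrite sgn_neg by auto.
  destruct (Rle_or_lt x 0) as [Hx|Hx].
  + generalize (Eerr_tail (- x) ltac:(lra)). unfold hfun. rewrite Eerr_odd. intros.
    replace ((- x)^2) with (x^2) in H by ring.
    rewrite Rabs_left1 by lra. nra.
  + assert (Hs' : 0 < s) by (destruct Hs; auto; subst x; subst; lra).
    assert (0 < nu + a).
    { destruct (Rle_or_lt (nu + a) 0); auto. subst x. nra. }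
    assert (x^2 <= a^2 * s^2).
    { subst x. simpl. assert (0 <= (nu + a) * (nu + a) <= a * a) by nra.
      assert (0 <= s * s) by nra. nra. }
    generalize (Hbig H0) (Eerr_abs x). intros.
    apply abs_le_inv in H2. apply Rabs_le. nra.
Qed.


Open Scope R_scope.

Lemma Cmod_cexp z : Cmod (cexp z) = exp (Re z).
Proof.
unfold Cmod, cexp, Re, Im; cbn [fst snd].
replace ((exp (fst z) * cos (snd z)) ^ 2 + (exp (fst z) * sin (snd z)) ^ 2)
  with (exp (fst z) ^ 2 * (Rsqr (sin (snd z)) + Rsqr (cos (snd z)))) by (unfold Rsqr; ring).
rewrite sin2_cos2, Rmult_1_r.
apply sqrt_pow2. left; apply exp_pos.
Qed.

Lemma powerRZ_m1_abs n : Rabs (powerRZ (-1) n) = 1.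
Proof.
destruct n; simpl.
- apply Rabs_R1.
- apply pow_1_abs.
- rewrite Rabs_inv, pow_1_abs. apply Rinv_1.
Qed.

Lemma exp_nat c m : exp (c * INR m) = (exp c) ^ m.
Proof.
induction m.
- simpl. rewrite Rmult_0_r. apply exp_0.
- rewrite S_INR, Rmult_plus_distr_l, Rmult_1_r, exp_plus, IHm. simpl. ring.
Qed.

Lemma Re_rCi r w : Re (Cmult (Cmult (RtoC r) Ci) w) = - r * Im w.
Proof. unfold Cmult, RtoC, Ci, Re, Im; simpl. ring. Qed.

Lemma nu_ne0 n : IZR n + / 2 <> 0.
Proof.
intros H. assert (H2 : IZR (2 * n) = IZR (-1)) by (rewrite mult_IZR; simpl; lra).
apply eq_IZR in H2. lia.
Qed.

Lemma abs_n_nu n : INR (Z.abs_nat n) <= Rabs (IZR n + / 2) + / 2.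
Proof.
rewrite INR_IZR_INZ, Zabs2Nat.id_abs, abs_IZR.
replace (IZR n) with ((IZR n + /2) - /2) at 1 by ring.
eapply Rle_trans; [apply Rabs_triang|]. rewrite Rabs_Ropp, (Rabs_right (/2)) by lra. lra.
Qed.

Lemma sq_ge_abs z : 2 * Rabs z - 1 <= z ^ 2.
Proof.
rewrite <- (pow2_abs z). pose proof (pow2_ge_0 (Rabs z - 1)). nra.
Qed.

Lemma Rterm_bound w sg n : 0 < Im sg ->
  Cmod (Rterm w sg n) <=
  2 * exp (PI * Im sg * (2 + 2 * Rabs (Im w / Im sg) + (Im w / Im sg) ^ 2))
    * (exp (-2 * PI * Im sg)) ^ (Z.abs_nat n).
Proof.
intros Ht. unfold Rterm. cbv zeta.
set (t := Im sg). set (a := Im w / t). set (nu := IZR n + / 2).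
rewrite !Cmod_mult, !Cmod_R, powerRZ_m1_abs, !Cmod_cexp, !Re_rCi, Rmult_1_r.
fold t. assert (Ht' : 0 < t) by exact Ht.
assert (Hs : 0 <= sqrt (2 * t)) by apply sqrt_pos.
assert (Hs2 : sqrt (2 * t) ^ 2 = 2 * t) by (apply pow2_sqrt; lra).
pose proof (sgnE_bound nu a (sqrt (2 * t)) (nu_ne0 n) Hs) as HB.
rewrite <- exp_nat.
eapply Rle_trans.
{ apply Rmult_le_compat_r. apply Rmult_le_pos; left; apply exp_pos. exact HB. }
rewrite !Rmult_assoc, <- !exp_plus.
apply Rmult_le_compat_l; [lra|]. apply exp_le_mono.
assert (Hw : Im w = a * t) by (unfold a; field; lra).
rewrite Hw.
pose proof (abs_n_nu n) as H1. fold nu in H1.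
pose proof (sq_ge_abs (nu + a)) as H2.
pose proof (Rabs_triang_inv nu a) as H3.
pose proof (Rabs_triang_inv nu (-a)) as H3'.
replace (nu - - a) with (nu + a) in H3' by ring. rewrite Rabs_Ropp in H3'.
assert (H4 : nu ^ 2 + 2 * nu * a = (nu + a) ^ 2 - a ^ 2) by ring.
assert (H5 : 2 * INR (Z.abs_nat n) - 2 - 2 * Rabs a - a ^ 2 <= nu ^ 2 + 2 * nu * a) by lra.
pose proof PI_RGT_0. 
assert (0 <= PI * t) by nra.
assert (Hk: 0 <= PI * t * (nu^2 + 2*nu*a - (2 * INR (Z.abs_nat n) - 2 - 2 * Rabs a - a ^ 2)))
  by (apply Rmult_le_pos; lra).
replace (((nu + a) * sqrt (2 * t)) ^ 2) with ((nu+a)^2 * sqrt (2 * t) ^ 2) by ring.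
rewrite Hs2. lra.
Qed.


Open Scope R_scope.

Fixpoint ssum (F : nat -> R) (n : nat) : R :=
  match n with O => 0 | S m => ssum F m + F m end.

Lemma ssum_ext_lt F G n : (forall k, (k < n)%nat -> F k = G k) -> ssum F n = ssum G n.
Proof. induction n; simpl; intros H; auto. rewrite IHn, H; auto. Qed.

Lemma ssum_plus F G n : ssum (fun k => F k + G k) n = ssum F n + ssum G n.
Proof. induction n; simpl; [ring|rewrite IHn; ring]. Qed.

Lemma ssum_add F a b : ssum F (a + b) = ssum F a + ssum (fun j => F (a + j)%nat) b.
Proof. induction b; simpl. rewrite Nat.add_0_r; ring.
rewrite Nat.add_succ_r; simpl. rewrite IHb. ring. Qed.

Lemma ssum_shift G n : ssum G (S n) = G O + ssum (fun k => G (S k)) n.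
Proof. induction n; simpl in *; [ring|]. rewrite IHn. ring. Qed.

Lemma ssum_rev F n : ssum F n = ssum (fun k => F (n - 1 - k)%nat) n.
Proof.
induction n; auto.
rewrite (ssum_shift (fun k => F (S n - 1 - k)%nat)). change (ssum F (S n)) with (ssum F n + F n).
rewrite IHn. replace (S n - 1 - 0)%nat with n by lia.
rewrite (ssum_ext_lt (fun k => F (S n - 1 - S k)%nat) (fun k => F (n - 1 - k)%nat)).
ring. intros k Hk. f_equal. lia.
Qed.

Lemma sum_n_ssum F n : sum_n F n = ssum F (S n).
Proof.
induction n.
- rewrite sum_O. simpl. symmetry. apply (Rplus_0_l (F 0%nat)).
- rewrite sum_Sn, IHn. reflexivity.
Qed.

Lemma Re_sum_n (F : nat -> C) n : Re (sum_n F n) = sum_n (fun k => Re (F k)) n.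
Proof. induction n. rewrite !sum_O; auto. rewrite !sum_Sn, <- IHn. reflexivity. Qed.
Lemma Im_sum_n (F : nat -> C) n : Im (sum_n F n) = sum_n (fun k => Im (F k)) n.
Proof. induction n. rewrite !sum_O; auto. rewrite !sum_Sn, <- IHn. reflexivity. Qed.

Lemma pow_decr r a b : 0 <= r <= 1 -> (b <= a)%nat -> r ^ a <= r ^ b.
Proof.
intros Hr Hab. replace a with (b + (a - b))%nat by lia. rewrite pow_add.
rewrite <- (Rmult_1_r (r ^ b)) at 2. apply Rmult_le_compat_l.
apply pow_le; lra. clear Hab. induction (a - b)%nat; simpl; [lra|]. pose proof (pow_le r n). nra.
Qed.

Definition pr (g : Z -> R) (m : nat) : R := g (Z.of_nat m) + g (- Z.of_nat (S m))%Z.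

Lemma bound_K_nonneg (g : Z -> R) K r : (forall n, Rabs (g n) <= K * r ^ Z.abs_nat n) -> 0 <= K.
Proof. intros Hb. specialize (Hb 0%Z). simpl in Hb. pose proof (Rabs_pos (g 0%Z)). lra. Qed.

Lemma ex_pr g K r : 0 <= r < 1 -> (forall n, Rabs (g n) <= K * r ^ Z.abs_nat n) ->
  ex_series (pr g).
Proof.
intros Hr Hb. pose proof (bound_K_nonneg g K r Hb) as HK.
apply (ex_series_le (pr g) (fun m => scal (2 * K) (r ^ m))).
- intros m. unfold norm; simpl; unfold abs; simpl. unfold pr, scal; simpl; unfold mult; simpl.
  eapply Rle_trans; [apply Rabs_triang|].
  pose proof (Hb (Z.of_nat m)) as H1. pose proof (Hb (- Z.of_nat (S m))%Z) as H2.
  rewrite Zabs2Nat.id in H1.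
  replace (Z.abs_nat (- Z.of_nat (S m))) with (S m) in H2 by lia.
  simpl in H2. pose proof (pow_le r m (proj1 Hr)).
  assert (K * (r * r ^ m) <= K * r ^ m) by (apply Rmult_le_compat_l; [lra|]; nra). lra.
- apply (ex_series_scal_l (2 * K) (fun m => r ^ m)). apply ex_series_geom.
  rewrite Rabs_right; lra.
Qed.

Lemma lim_ssum a : ex_series a -> is_lim_seq (ssum a) (Series a).
Proof.
intros H. apply is_lim_seq_incr_1.
apply (is_lim_seq_ext (sum_n a)). intros n; apply sum_n_ssum.
apply (Series_correct a H).
Qed.

Lemma is_lim_seq_ssum (u : nat -> nat -> R) (l : nat -> R) n :
  (forall k, (k < n)%nat -> is_lim_seq (u k) (l k)) ->
  is_lim_seq (fun M => ssum (fun k => u k M) n) (ssum l n).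
Proof.
induction n; intros H; simpl.
- apply is_lim_seq_const.
- apply is_lim_seq_plus'. apply IHn; intros; apply H; lia. apply H; lia.
Qed.

Lemma ssum_zero n : ssum (fun _ => 0) n = 0.
Proof. induction n; simpl; [auto|rewrite IHn; ring]. Qed.

Lemma split_series g K r N : (1 <= N)%nat -> 0 <= r < 1 ->
  (forall n, Rabs (g n) <= K * r ^ Z.abs_nat n) ->
  Series (pr g) = ssum (fun k => Series (pr (fun m => g (Z.of_nat N * m + Z.of_nat k)%Z))) N.
Proof.
intros HN Hr Hb. pose proof (bound_K_nonneg g K r Hb) as HK.
set (gk := fun k m => g (Z.of_nat N * m + Z.of_nat k)%Z).
assert (exk : forall k, (k < N)%nat -> ex_series (pr (gk k))).
{ intros k Hk. apply (ex_pr _ K r Hr). intros m. unfold gk.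
  eapply Rle_trans; [apply Hb|]. apply Rmult_le_compat_l; auto.
  apply pow_decr; [lra|]. nia. }
assert (AB : forall M, ssum (pr g) (N * M) = ssum (fun k => ssum (pr (gk k)) M) N).
{ induction M.
  - rewrite Nat.mul_0_r. simpl. rewrite ssum_zero. auto.
  - replace (N * S M)%nat with (N * M + N)%nat by lia.
    rewrite ssum_add, IHM.
    change (ssum (fun k => ssum (pr (gk k)) (S M)) N) with
      (ssum (fun k => ssum (pr (gk k)) M + pr (gk k) M) N).
    rewrite ssum_plus. f_equal.
    unfold pr. rewrite !ssum_plus. f_equal.
    + apply ssum_ext_lt. intros k Hk. unfold gk. f_equal. lia.
    + rewrite ssum_rev. apply ssum_ext_lt. intros k Hk. unfold gk. f_equal. lia. }
assert (L1 : is_lim_seq (fun M => ssum (pr g) (N * M)) (Series (pr g))).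
{ apply (is_lim_seq_subseq (ssum (pr g)) _ (fun M => N * M)%nat).
  - intros P [N0 HP]. exists N0. intros n Hn. apply HP. nia.
  - apply lim_ssum. apply (ex_pr g K r Hr Hb). }
assert (L2 : is_lim_seq (fun M => ssum (fun k => ssum (pr (gk k)) M) N)
                        (ssum (fun k => Series (pr (gk k))) N)).
{ apply (is_lim_seq_ssum (fun k M => ssum (pr (gk k)) M)). intros k Hk.
  apply lim_ssum, exk; auto. }
apply (is_lim_seq_ext _ _ _ AB) in L1.
apply is_lim_seq_unique in L1. apply is_lim_seq_unique in L2.
rewrite L1 in L2. injection L2. auto.
Qed.


Open Scope R_scope.

Lemma im_le_Cmod c : Rabs (Im c) <= Cmod c.
Proof.
unfold Cmod. rewrite <- sqrt_Rsqr_abs. apply sqrt_le_1_alt.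
unfold Rsqr, Im. simpl. pose proof (pow2_ge_0 (fst c)). simpl in H. nra.
Qed.

Lemma ex_series_Rscal c a : ex_series a -> ex_series (fun n => c * a n).
Proof. intros H. apply (ex_series_scal_l c a H). Qed.

Definition Cbound (f : Z -> C) K r := forall n, Cmod (f n) <= K * r ^ Z.abs_nat n.

Lemma Cbound_re f K r : Cbound f K r -> forall n, Rabs (Re (f n)) <= K * r ^ Z.abs_nat n.
Proof. intros H n. eapply Rle_trans; [apply re_le_Cmod|apply H]. Qed.
Lemma Cbound_im f K r : Cbound f K r -> forall n, Rabs (Im (f n)) <= K * r ^ Z.abs_nat n.
Proof. intros H n. eapply Rle_trans; [apply im_le_Cmod|apply H]. Qed.

Lemma ZSeries_fst f : fst (ZSeries f) = Series (pr (fun n => Re (f n))).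
Proof. reflexivity. Qed.
Lemma ZSeries_snd f : snd (ZSeries f) = Series (pr (fun n => Im (f n))).
Proof. reflexivity. Qed.

Lemma ZSeries_split f K r N : (1 <= N)%nat -> 0 <= r < 1 -> Cbound f K r ->
  ZSeries f = sum_n (fun k => ZSeries (fun m => f (Z.of_nat N * m + Z.of_nat k)%Z)) (N - 1).
Proof.
intros HN Hr Hb. apply injective_projections.
- change (fst (sum_n (fun k => ZSeries (fun m => f (Z.of_nat N * m + Z.of_nat k)%Z)) (N - 1)))
    with (Re (sum_n (fun k => ZSeries (fun m => f (Z.of_nat N * m + Z.of_nat k)%Z)) (N - 1))).
  rewrite Re_sum_n, sum_n_ssum. replace (S (N - 1)) with N by lia.
  rewrite ZSeries_fst. apply (split_series _ K r N HN Hr (Cbound_re f K r Hb)).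
- change (snd (sum_n (fun k => ZSeries (fun m => f (Z.of_nat N * m + Z.of_nat k)%Z)) (N - 1)))
    with (Im (sum_n (fun k => ZSeries (fun m => f (Z.of_nat N * m + Z.of_nat k)%Z)) (N - 1))).
  rewrite Im_sum_n, sum_n_ssum. replace (S (N - 1)) with N by lia.
  rewrite ZSeries_snd. apply (split_series _ K r N HN Hr (Cbound_im f K r Hb)).
Qed.

Lemma ZSeries_scal c f K r : 0 <= r < 1 -> Cbound f K r ->
  Cmult c (ZSeries f) = ZSeries (fun n => Cmult c (f n)).
Proof.
intros Hr Hb.
pose proof (ex_pr _ K r Hr (Cbound_re f K r Hb)) as HA.
pose proof (ex_pr _ K r Hr (Cbound_im f K r Hb)) as HB.
set (A := pr (fun n => Re (f n))) in *. set (B := pr (fun n => Im (f n))) in *.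
apply injective_projections.
- change (fst (Cmult c (ZSeries f))) with (fst c * fst (ZSeries f) - snd c * snd (ZSeries f)).
  rewrite !ZSeries_fst, ZSeries_snd. fold A B.
  rewrite (Series_ext (pr (fun n => Re (Cmult c (f n)))) (fun m => fst c * A m - snd c * B m)).
  2:{ intros m. unfold A, B, pr. simpl. unfold Re, Im. ring. }
  rewrite Series_minus, !Series_scal_l; auto; apply ex_series_Rscal; auto.
- change (snd (Cmult c (ZSeries f))) with (fst c * snd (ZSeries f) + snd c * fst (ZSeries f)).
  rewrite !ZSeries_snd, ZSeries_fst. fold A B.
  rewrite (Series_ext (pr (fun n => Im (Cmult c (f n)))) (fun m => fst c * B m + snd c * A m)).
  2:{ intros m. unfold A, B, pr. simpl. unfold Re, Im. ring. }
  rewrite Series_plus, !Series_scal_l; auto; apply ex_series_Rscal; auto.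
Qed.


Open Scope R_scope.

Lemma cexp_add a b : Cmult (cexp a) (cexp b) = cexp (Cplus a b).
Proof.
unfold cexp, Cmult, Cplus, Re, Im; cbn [fst snd].
rewrite exp_plus, cos_plus, sin_plus. apply injective_projections; cbn [fst snd]; ring.
Qed.

Lemma cexp_0 : cexp (RtoC 0) = RtoC 1.
Proof. unfold cexp, RtoC, Re, Im; cbn [fst snd]. rewrite exp_0, cos_0, sin_0. f_equal; ring. Qed.

Lemma cexp_Zstep (z : Z) (th : R) :
  cexp (0, th) = RtoC 1 -> cexp (0, th * IZR z) = RtoC 1.
Proof.
intros H. induction z using Z.peano_ind.
- replace (th * IZR 0) with 0 by (simpl; ring). exact cexp_0.
- rewrite succ_IZR. replace (0, th * (IZR z + 1)) with (Cplus (0, th * IZR z) (0, th))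
    by (unfold Cplus; f_equal; simpl; ring).
  rewrite <- cexp_add, IHz, H. ring.
- rewrite <- Z.sub_1_r, minus_IZR. replace (0, th * IZR z) with (Cplus (0, th * (IZR z - 1)) (0, th)) in IHz
    by (unfold Cplus; f_equal; simpl; ring).
  rewrite <- cexp_add, H, Cmult_1_r in IHz. exact IHz.
Qed.

Lemma cexp_2PI : cexp (0, 2 * PI) = RtoC 1.
Proof. unfold cexp, RtoC; cbn [fst snd Re Im]. unfold Re, Im; cbn [fst snd].
rewrite exp_0, cos_2PI, sin_2PI. f_equal; ring. Qed.

Lemma cexp_per z (j : Z) : cexp (Cplus z (0, 2 * PI * IZR j)) = cexp z.
Proof. rewrite <- cexp_add, (cexp_Zstep j (2 * PI) cexp_2PI). ring. Qed.

Lemma cexp_PI : cexp (0, PI) = RtoC (-1).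
Proof. unfold cexp, RtoC, Re, Im; cbn [fst snd]. rewrite exp_0, cos_PI, sin_PI. f_equal; ring. Qed.

Lemma RtoC_pm1 (n : Z) : RtoC (powerRZ (-1) n) = cexp (0, PI * IZR n).
Proof.
induction n using Z.peano_ind.
- simpl. replace (PI * 0) with 0 by ring. rewrite <- cexp_0. reflexivity.
- rewrite <- Z.add_1_r, powerRZ_add by lra. rewrite plus_IZR.
  replace (0, PI * (IZR n + IZR 1)) with (Cplus (0, PI * IZR n) (0, PI))
    by (unfold Cplus; f_equal; simpl; ring).
  rewrite <- cexp_add, <- IHn, cexp_PI. simpl. unfold RtoC, Cmult; simpl. f_equal; ring.
- assert (E : powerRZ (-1) n = - powerRZ (-1) (Z.pred n)).
  { replace n with (Z.pred n + 1)%Z at 1 by lia. rewrite powerRZ_add by lra. simpl. ring. }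
  rewrite E in IHn. rewrite <- Z.sub_1_r in *. rewrite minus_IZR.
  replace (0, PI * IZR n) with (Cplus (0, PI * (IZR n - 1)) (0, PI)) in IHn
    by (unfold Cplus; f_equal; simpl; ring).
  rewrite <- cexp_add, cexp_PI in IHn.
  replace (cexp (0, PI * (IZR n - 1))) with (Cmult (cexp (0, PI * (IZR n - 1))) (Cmult (RtoC (-1)) (RtoC (-1)))).
  2:{ replace (Cmult (RtoC (-1)) (RtoC (-1))) with (RtoC 1) by (unfold RtoC, Cmult; simpl; f_equal; ring). ring. }
  rewrite Cmult_assoc, <- IHn. unfold RtoC, Cmult; simpl. f_equal; ring.
Qed.

Lemma RtoC_pow_m1 (k : nat) : RtoC ((-1) ^ k) = cexp (0, PI * INR k).
Proof. rewrite pow_powerRZ, INR_IZR_INZ. apply RtoC_pm1. Qed.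

Lemma Cpow_mi (n : nat) : Cpow (Copp Ci) n = cexp (0, - PI / 2 * INR n).
Proof.
induction n.
- simpl. replace (- PI / 2 * 0) with 0 by ring. rewrite <- cexp_0. reflexivity.
- simpl Cpow. rewrite IHn, S_INR.
  replace (0, - PI / 2 * (INR n + 1)) with (Cplus (0, - PI / 2) (0, - PI / 2 * INR n))
    by (unfold Cplus; f_equal; simpl; ring).
  rewrite <- cexp_add. f_equal.
  unfold cexp, Copp, Ci, Re, Im; cbn [fst snd]. rewrite exp_0.
  replace (- PI / 2) with (- (PI / 2)) by field.
  rewrite cos_neg, sin_neg, cos_PI2, sin_PI2. f_equal; ring.
Qed.


Open Scope R_scope.

Definition Sfac (w sg : C) (n : Z) : R :=
  sgn (IZR n + / 2) - Eerr ((IZR n + / 2 + Im w / Im sg) * sqrt (2 * Im sg)).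
Definition Zph (w sg : C) (n : Z) : C :=
  Cplus (Cplus (0, PI * IZR n) (Cmult (Cmult (RtoC (- 2 * PI * (IZR n + / 2))) Ci) w))
        (Cmult (Cmult (RtoC (- PI * (IZR n + / 2) ^ 2)) Ci) sg).

Lemma Rterm_form w sg n : Rterm w sg n = Cmult (RtoC (Sfac w sg n)) (cexp (Zph w sg n)).
Proof.
unfold Rterm, Sfac, Zph. cbv zeta. rewrite RtoC_pm1. rewrite <- !cexp_add. ring.
Qed.

Lemma Sfac_eq N u tau k m : (1 <= N)%nat -> (k <= N - 1)%nat -> 0 < Im tau ->
  Sfac u (Cdiv tau (RtoC (INR N))) (Z.of_nat N * m + Z.of_nat k) =
  Sfac (Cplus (Cplus (Cplus (Cmult (RtoC (INR N)) u) (Cmult (RtoC (INR k)) tau))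
                              (Copp (Cmult (RtoC ((INR N - 1) / 2)) tau)))
                       (RtoC ((INR N + 1) / 2)))
       (Cmult (RtoC (INR N)) tau) m.
Proof.
intros HN Hk Ht. unfold Sfac.
assert (HN' : 1 <= INR N) by (apply (le_INR 1); auto).
assert (Hk' : INR k <= INR N - 1).
{ replace (INR N - 1) with (INR (N - 1)) by (rewrite minus_INR by lia; simpl; ring). apply le_INR; auto. }
pose proof (pos_INR k) as Hk0.
rewrite plus_IZR, mult_IZR, <- !INR_IZR_INZ.
assert (E1 : Im (Cdiv tau (RtoC (INR N))) = Im tau / INR N).
{ unfold Cdiv, Cinv, Cmult, RtoC, Im; cbn [fst snd]. field. lra. }
assert (E2 : Im (Cmult (RtoC (INR N)) tau) = INR N * Im tau).
{ unfold Cmult, RtoC, Im; cbn [fst snd]. ring. }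
assert (E3 : Im (Cplus (Cplus (Cplus (Cmult (RtoC (INR N)) u) (Cmult (RtoC (INR k)) tau))
                              (Copp (Cmult (RtoC ((INR N - 1) / 2)) tau)))
                       (RtoC ((INR N + 1) / 2))) = INR N * Im u + INR k * Im tau - (INR N - 1) / 2 * Im tau).
{ unfold Cplus, Cmult, Copp, RtoC, Im; cbn [fst snd]. ring. }
rewrite E1, E2, E3.
f_equal.
- destruct (Z_le_gt_dec 0 m) as [Hm|Hm].
  + apply IZR_le in Hm. rewrite !sgn_pos; auto; nra.
  + assert (Hm' : IZR m <= -1) by (apply IZR_le; lia).
    rewrite !sgn_neg; auto; nra.
- f_equal.
  assert (Hs : sqrt (2 * (INR N * Im tau)) = INR N * sqrt (2 * (Im tau / INR N))).
  { replace (2 * (INR N * Im tau)) with ((INR N * INR N) * (2 * (Im tau / INR N))) by (field; lra).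
    rewrite sqrt_mult_alt, sqrt_square; auto; nra. }
  rewrite Hs. field. lra.
Qed.

Lemma rearr4 a b c d S : Cmult (Cmult (Cmult (cexp a) (cexp b)) (cexp c)) (Cmult S (cexp d)) =
  Cmult S (cexp (Cplus (Cplus (Cplus a b) c) d)).
Proof. rewrite <- !cexp_add. ring. Qed.

Lemma termwise N u tau k m : (1 <= N)%nat -> (k <= N - 1)%nat -> 0 < Im tau ->
  Cmult (Cmult (Cmult (Cpow (Copp Ci) (N + 1))
                      (cexp (Cmult (Cmult (RtoC (- PI * (INR N - 1))) Ci) u)))
               (qpow tau ((INR N - 1) ^ 2 / (8 * INR N))))
        (Rterm u (Cdiv tau (RtoC (INR N))) (Z.of_nat N * m + Z.of_nat k))
  = Cmult (Cmult (Cmult (RtoC ((-1) ^ k))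
                        (cexp (Cmult (Cmult (RtoC (- 2 * PI * INR k)) Ci) u)))
                 (qpow tau (- (INR k * (INR k - INR N + 1)) / (2 * INR N))))
          (Rterm (Cplus (Cplus (Cplus (Cmult (RtoC (INR N)) u) (Cmult (RtoC (INR k)) tau))
                              (Copp (Cmult (RtoC ((INR N - 1) / 2)) tau)))
                       (RtoC ((INR N + 1) / 2)))
                (Cmult (RtoC (INR N)) tau) m).
Proof.
intros HN Hk Ht.
assert (HN' : 1 <= INR N) by (apply (le_INR 1); auto).
rewrite !Rterm_form, Sfac_eq by auto.
rewrite Cpow_mi, RtoC_pow_m1. unfold qpow.
rewrite !rearr4. f_equal.
symmetry. rewrite <- (cexp_per _ (Z.of_nat N * m)). f_equal.
unfold Zph, Cplus, Cmult, RtoC, Ci, Cdiv, Cinv, Copp.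
rewrite !plus_IZR, !mult_IZR, <- !INR_IZR_INZ, plus_INR.
apply injective_projections; cbn [fst snd]; unfold Cmult, Cinv; cbn [fst snd]; change (INR 1) with 1. all: replace (INR N ^ 2 + 0 ^ 2) with (INR N * INR N) by ring. all: field; lra.
Qed.


Open Scope R_scope.

Lemma ZSeries_ext f g : (forall n, f n = g n) -> ZSeries f = ZSeries g.
Proof.
intros H. unfold ZSeries, CSeries. f_equal; apply Series_ext; intros; rewrite !H; auto.
Qed.

Lemma Rterm_Cbound w sg : 0 < Im sg -> exists K r, 0 <= r < 1 /\ Cbound (Rterm w sg) K r.
Proof.
intros Ht. eexists. exists (exp (-2 * PI * Im sg)). split.
- split. left; apply exp_pos. rewrite <- exp_0. apply exp_increasing.
  pose proof PI_RGT_0. nra.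
- intros n. apply Rterm_bound; auto.
Qed.

Lemma Cbound_scal c f K r : Cbound f K r -> Cbound (fun n => Cmult c (f n)) (Cmod c * K) r.
Proof.
intros H n. rewrite Cmod_mult, Rmult_assoc. apply Rmult_le_compat_l. apply Cmod_ge_0. apply H.
Qed.

Theorem lemma3p5 (N : nat) (u tau : C) (HN : (1 <= N)%nat) (Htau : 0 < Im tau) :
  Cmult (Cmult (Cmult (Cpow (Copp Ci) (N + 1))
                      (cexp (Cmult (Cmult (RtoC (- PI * (INR N - 1))) Ci) u)))
               (qpow tau ((INR N - 1) ^ 2 / (8 * INR N))))
        (Rfun u (Cdiv tau (RtoC (INR N))))
  =
  sum_n (fun k : nat =>
    Cmult (Cmult (Cmult (RtoC ((-1) ^ k))
                        (cexp (Cmult (Cmult (RtoC (- 2 * PI * INR k)) Ci) u)))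
                 (qpow tau (- (INR k * (INR k - INR N + 1)) / (2 * INR N))))
          (Rfun (Cplus (Cplus (Cplus (Cmult (RtoC (INR N)) u) (Cmult (RtoC (INR k)) tau))
                              (Copp (Cmult (RtoC ((INR N - 1) / 2)) tau)))
                       (RtoC ((INR N + 1) / 2)))
                (Cmult (RtoC (INR N)) tau)))
    (N - 1)%nat.
Proof.
assert (HN' : 1 <= INR N) by (apply (le_INR 1); auto).
assert (Ht1 : 0 < Im (Cdiv tau (RtoC (INR N)))).
{ replace (Im (Cdiv tau (RtoC (INR N)))) with (Im tau / INR N).
  apply Rdiv_lt_0_compat; lra.
  unfold Cdiv, Cinv, Cmult, RtoC, Im; cbn [fst snd]. field. lra. }
assert (Ht2 : 0 < Im (Cmult (RtoC (INR N)) tau)).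
{ replace (Im (Cmult (RtoC (INR N)) tau)) with (INR N * Im tau).
  apply Rmult_lt_0_compat; lra.
  unfold Cmult, RtoC, Im; cbn [fst snd]. ring. }
destruct (Rterm_Cbound u _ Ht1) as [K [r [Hr Hb]]].
unfold Rfun at 1.
rewrite (ZSeries_scal _ _ K r Hr Hb).
rewrite (ZSeries_split _ _ r N HN Hr (Cbound_scal _ _ K r Hb)).
apply sum_n_ext_loc. intros k Hk.
rewrite (ZSeries_ext _ (fun m => Cmult
    (Cmult (Cmult (RtoC ((-1) ^ k))
                  (cexp (Cmult (Cmult (RtoC (- 2 * PI * INR k)) Ci) u)))
           (qpow tau (- (INR k * (INR k - INR N + 1)) / (2 * INR N))))
    (Rterm (Cplus (Cplus (Cplus (Cmult (RtoC (INR N)) u) (Cmult (RtoC (INR k)) tau))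
                              (Copp (Cmult (RtoC ((INR N - 1) / 2)) tau)))
                       (RtoC ((INR N + 1) / 2)))
           (Cmult (RtoC (INR N)) tau) m))).
2:{ intros m. apply termwise; auto. }
destruct (Rterm_Cbound (Cplus (Cplus (Cplus (Cmult (RtoC (INR N)) u) (Cmult (RtoC (INR k)) tau))
                              (Copp (Cmult (RtoC ((INR N - 1) / 2)) tau)))
                       (RtoC ((INR N + 1) / 2))) _ Ht2) as [K2 [r2 [Hr2 Hb2]]].
unfold Rfun. rewrite (ZSeries_scal _ _ K2 r2 Hr2 Hb2). reflexivity.
Qed.
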